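(* Let $(X,d,\kappa)$ be a digital metric space where $d$ is an $\ell_p$ metric for some $1\le p\le\infty$. Suppose $T:X\to X$ satisfies $d(T(x),T(y))\le\psi(d(x,y))$ for all $x,y\in X$, where $\psi:[0,\infty)\to[0,\infty)$ is monotone nondecreasing and satisfies $\lim_{n\to\infty}\psi^n(t)=0$ for all $t>0$ ($\psi^n$ the $n$-fold composition). Then $T$ has a unique fixed point.
   Context: A digital metric space is a triple $(X,d,\kappa)$ where $X\subset\mathbb{Z}^n$ for some positive integer $n$, $\kappa$ is an adjacency relation on $X$, and $d$ is a metric on $X$. The $\ell_p$ metric on $\mathbb{Z}^n$ is $d(x,y)=(\sum_i|x_i-y_i|^p)^{1/p}$ for $1\le p<\infty$ and $\max_i|x_i-y_i|$ for $p=\infty$. *)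

(* Defs.v *)
From HB Require Import structures.
From mathcomp Require Import all_boot all_order all_algebra.
From mathcomp Require Import all_classical all_reals all_analysis.
Set Implicit Arguments. Unset Strict Implicit. Unset Printing Implicit Defensive.
Import Order.TTheory GRing.Theory Num.Theory.
Local Open Scope ring_scope.

(* Points of Z^n are integer row vectors 'rV[int]_n; coordinate i of x is x 0 i. *)

(* The l_p metric on Z^n, for an exponent p in the extended reals:
   p = r%:E (finite, meaningful for 1 <= r):  (sum_i |x_i - y_i|^r)^(1/r)
   p = +oo : max_i |x_i - y_i|
   p = -oo : not an admissible exponent (excluded by the hypothesis 1 <= p);
             we set the value to 0 there. *)
Definition lp_dist (R : realType) (n : nat) (p : \bar R)
  (x y : 'rV[int]_n) : R :=
  match p with
  | EFin r => powR (\sum_(i < n) powR (`|x 0 i - y 0 i|%:~R) r) r^-1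
  | +oo%E => \big[Num.max/0]_(i < n) (`|x 0 i - y 0 i|%:~R)
  | -oo%E => 0
  end.

(* Main.v *)
Require Import Defs.
From HB Require Import structures.
From mathcomp Require Import all_boot all_order all_algebra.
From mathcomp Require Import all_classical all_reals all_analysis.
Import Order.TTheory GRing.Theory Num.Theory.
Local Open Scope classical_set_scope.
Local Open Scope ring_scope.

Lemma lp_ge0 (R : realType) (n : nat) (p : \bar R) (x y : 'rV[int]_n) :
  (1%:E <= p)%E -> 0 <= lp_dist p x y.
Proof.
case: p => [r| |] //= _; first exact: powR_ge0.
exact: bigmax_ge_id.
Qed.

Lemma lp_ge1 (R : realType) (n : nat) (p : \bar R) (x y : 'rV[int]_n) :
  (1%:E <= p)%E -> x != y -> 1 <= lp_dist p x y.
Proof.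
move=> hp nxy.
have [i hi] : exists i, x 0 i != y 0 i.
  apply/existsP; apply: contraNT nxy => /existsPn H; apply/eqP/rowP => j.
  by apply/eqP; have := H j; rewrite negbK.
have h1 : (1 : R) <= (`|x 0 i - y 0 i|%:~R).
  by rewrite ler1z -gtz0_ge1 normr_gt0 subr_eq0.
case: p hp => [r| |] //=.
- rewrite lee_fin => r1.
  have H1 : 1 <= \sum_(i0 < n) powR (`|x 0 i0 - y 0 i0|%:~R) r.
    rewrite (bigD1 i) //=.
    have Hs : forall a b : R, 0 <= b -> a <= a + b by move=> a b hb; rewrite lerDl.
    apply: le_trans (Hs _ _ _); last by apply: sumr_ge0 => k _; exact: powR_ge0.
    rewrite -{1}(powRr0 (`|x 0 i - y 0 i|%:~R)); apply: ler_powR => //.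
    by apply: le_trans r1.
  rewrite -{1}(powRr0 (\sum_(i0 < n) powR (`|x 0 i0 - y 0 i0|%:~R) r)); apply: ler_powR => //.
  by rewrite invr_ge0; apply: le_trans r1.
- move=> _; apply: le_trans h1 _; exact: le_bigmax.
Qed.

Theorem theorem8p7 (R : realType) (n : nat) (X : set 'rV[int]_n)
  (kappa : 'rV[int]_n -> 'rV[int]_n -> Prop) (p : \bar R)
  (T : 'rV[int]_n -> 'rV[int]_n) (psi : R -> R) :
  (1%:E <= p)%E ->
  X !=set0 ->
  (forall x, X x -> X (T x)) ->
  (forall t, 0 <= t -> 0 <= psi t) ->
  (forall s t, 0 <= s -> s <= t -> psi s <= psi t) ->
  (forall t, 0 < t -> (fun k : nat => iter k psi t) @ \oo --> 0) ->
  (forall x y, X x -> X y -> lp_dist p (T x) (T y) <= psi (lp_dist p x y)) ->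
  exists x, [/\ X x, T x = x & forall y, X y -> T y = y -> y = x].
Proof.
move=> hp [x0 Xx0] XT psi0 psimon psicvg hT.
have small : forall t, 0 < t -> exists k, iter k psi t < 1.
  move=> t tp; have := cvgr_lt _ (psicvg t tp) _ ltr01.
  by case=> N _ HN; exists N; apply: HN => /=.
have uniq : forall a b, X a -> X b -> T a = a -> T b = b -> b = a.
  move=> a b Xa Xb Ta Tb; apply/eqP; apply: contraT => nab.
  have d1 := lp_ge1 _ _ _ _ _ hp nab.
  have key : forall k, lp_dist p b a <= iter k psi (lp_dist p b a).
    elim=> [|k IH] //=.
    apply: le_trans (psimon _ _ (lp_ge0 _ _ _ _ _ hp) IH).
    by have := hT b a Xb Xa; rewrite Ta Tb.
  have [k hk] := small _ (lt_le_trans ltr01 d1).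
  by have := le_lt_trans d1 (le_lt_trans (key k) hk); rewrite ltxx.
have iterX : forall k, X (iter k T x0) by elim => //= k IH; apply: XT.
suff [k hk] : exists k, T (iter k T x0) = iter k T x0.
  exists (iter k T x0); split; [exact: iterX | exact: hk | ].
  by move=> y Xy Ty; apply: uniq => //; exact: iterX.
have [e|ne] := eqVneq x0 (T x0); first by exists 0%N.
set d0 := lp_dist p x0 (T x0).
have d1 : 1 <= d0 by exact: lp_ge1.
have key : forall k, lp_dist p (iter k T x0) (T (iter k T x0)) <= iter k psi d0.
  elim=> [|k IH] //=.
  apply: le_trans (psimon _ _ (lp_ge0 _ _ _ _ _ hp) IH).
  exact: hT (iterX k) (XT _ (iterX k)).
have [k hk] := small _ (lt_le_trans ltr01 d1).
exists k; apply/eqP; rewrite eq_sym; apply: contraT => nk.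
have := le_lt_trans (lp_ge1 _ _ _ _ _ hp nk) (le_lt_trans (key k) hk).
by rewrite ltxx.
Qed.
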